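(* Let $q$ be a prime power, $A=\mathbb{F}_q[T]$, and let $m\in A$ be a monic polynomial of degree $d>1$. Write $\det D_m^{(-)}(X)=1+a_1X+a_2X^2+\cdots$ with the matrix $D_m^{(-)}(X)$ defined in the context. Then: (1) $a_1=0$; (2) if $\deg m>2$, then $a_2=0$; (3) if $\deg m=2$, then $a_2=\frac{N_m}{2}\{(q-1)(1-C_m)+N_m-1\}$, where $C_m=\#\{i\in\{1,\dots,N_m\}: L(\alpha_i^{-1})=1\}$.
   Context: For $\alpha\in(A/(m))^\times$ let $r_\alpha\in A$ be the unique representative of $\alpha$ with $\deg r_\alpha<d$; set $\mathrm{Deg}(\alpha)=\deg r_\alpha$ and let $L(\alpha)\in\mathbb{F}_q^\times$ be the leading coefficient of $r_\alpha$. Let $N_m=\#(A/(m))^\times/(q-1)$ and let $\alpha_1,\dots,\alpha_{N_m}$ be all elements of $(A/(m))^\times$ with $L(\alpha)=1$. For a character $\lambda$ of $\mathbb{F}_q^\times$ put $c_{ij}^\lambda=\lambda^{-1}(L(\alpha_i\alpha_j^{-1}))$, $d_{ij}=\mathrm{Deg}(\alpha_i\alpha_j^{-1})$, $D_m^{(\lambda)}(X)=(c_{ij}^\lambda X^{d_{ij}})_{i,j=1,\dots,N_m}$, and $D_m^{(-)}(X)=\prod_{\lambda\ne1}D_m^{(\lambda)}(X)$, the product over all non-trivial characters of $\mathbb{F}_q^\times$. (Since $D_m^{(-)}(0)$ is the identity matrix, $\det D_m^{(-)}(X)$ has constant term $1$ and integer coefficients.) *)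

(* Defs.v *)
From HB Require Import structures.
From mathcomp Require Import all_boot all_order all_algebra all_fingroup all_solvable all_field all_character.
Set Implicit Arguments. Unset Strict Implicit. Unset Printing Implicit Defensive.
Import Order.TTheory GRing.Theory Num.Theory.
Local Open Scope ring_scope.

(* F = F_q (a finite field), A = {poly F}, m monic of degree d = (size m).-1.
   (A/(m)) is MathComp's {poly %/ m}; its elements are represented by their
   unique representatives r_alpha of size <= d.-1+1, i.e. deg < d. *)

Section Dm.
Variables (F : finFieldType) (m : {poly F}).

Definition rep (a : {poly %/ m}) : {poly F} := val a.
Definition Deg (a : {poly %/ m}) : nat := (size (rep a)).-1.
Definition Lc (a : {poly %/ m}) : F := lead_coef (rep a).

Definition Lone : {set {poly %/ m}} :=
  [set a : {poly %/ m} | (a \is a GRing.unit) && (Lc a == 1)].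
Definition Nm : nat := #|Lone|.
Definition alpha (i : 'I_Nm) : {poly %/ m} := enum_val i.

(* an element of F viewed in the group F^x (default 1 if it is 0) *)
Definition toU (c : F) : {unit F} := insubd (1%g : {unit F}) c.

(* the group F_q^x, whose characters are its (linear) irreducible characters *)
Definition Fx : {group {unit F}} := [set: {unit F}]%G.

Definition Dlam (k : Iirr Fx) : 'M[{poly algC}]_Nm :=
  \matrix_(i, j)
    ((('chi[Fx]_k (toU (Lc (alpha i * (alpha j)^-1))))^-1)%:P
       * 'X^(Deg (alpha i * (alpha j)^-1))).

Definition Dminus : 'M[{poly algC}]_Nm :=
  \big[mulmx/1%:M]_(k : Iirr Fx | 'chi[Fx]_k != 1) Dlam k.

Definition Cm : nat := #|[set i : 'I_Nm | Lc ((alpha i)^-1) == 1]|.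

End Dm.

(* Main.v *)
Require Import Defs.
From HB Require Import structures.
From mathcomp Require Import all_boot all_order all_algebra all_fingroup all_solvable all_field all_character.
Import Order.TTheory GRing.Theory Num.Theory.
From mathcomp Require Import zify ring.
Local Open Scope ring_scope.

Section DetCoef.
Variables (R : comNzRingType) (n : nat) (c : 'I_n -> 'I_n -> R) (d : 'I_n -> 'I_n -> nat).
Hypotheses (c_diag : forall i, c i i = 1) (d_diag : forall i, d i i = 0%N)
  (d_off : forall i j, i != j -> (0 < d i j)%N).

Definition Mcd : 'M[{poly R}]_n := \matrix_(i, j) ((c i j)%:P * 'X^(d i j)).

Definition Dsum (s : 'S_n) := (\sum_i d i (s i))%N.

Lemma det_Mcd_coef k : (\det Mcd)`_k =
  \sum_(s : 'S_n) (-1) ^+ s * (\prod_i c i (s i)) * (k == Dsum s)%:R.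
Proof.
rewrite /determinant coef_sum; apply: eq_bigr => s _.
have -> : \prod_i Mcd i (s i) = (\prod_i c i (s i))%:P * 'X^(Dsum s).
  rewrite /Mcd; under eq_bigr do rewrite mxE.
  rewrite big_split /= -rmorph_prod; congr (_ * _).
  by rewrite /Dsum; elim/big_rec2: _ => // i x y _ ->; rewrite exprD.
rewrite -mulrA mulr_sign; case: (odd_perm s) => /=.
  by rewrite coefN coefCM coefXn mulN1r.
by rewrite expr0 !mul1r coefCM coefXn.
Qed.

Lemma Dsum1 : Dsum 1 = 0%N.
Proof. by rewrite /Dsum big1 // => i _; rewrite perm1 d_diag. Qed.

Lemma moved_moved (s : 'S_n) i : s i != i -> s (s i) != s i.
Proof. by apply: contra => /eqP /perm_inj ->. Qed.

Lemma Dsum_ge2 (s : 'S_n) : s != 1%g -> (2 <= Dsum s)%N.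
Proof.
move=> s1.
have [i si] : exists i, s i != i.
  apply/existsP; move: s1; apply: contraR; rewrite negb_exists => /forallP H.
  by apply/eqP/permP => x; rewrite perm1; apply/eqP; move: (H x); rewrite negbK.
rewrite /Dsum (bigD1 i) //= (bigD1 (s i)) //=.
have h1 : (0 < d i (s i))%N by apply: d_off; rewrite eq_sym.
have h2 : (0 < d (s i) (s (s i)))%N by apply: d_off; rewrite eq_sym moved_moved.
by rewrite addnA (leq_trans _ (leq_addr _ _)) // -(addn1 1) leq_add.
Qed.

Lemma Dsum_eq2 (s : 'S_n) : Dsum s = 2%N ->
  exists i j, [/\ i != j, s = tperm i j, d i j = 1%N & d j i = 1%N].
Proof.
move=> D2.
have s1 : s != 1%g by apply/eqP => s1; move: D2; rewrite s1 Dsum1.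
have [i si] : exists i, s i != i.
  apply/existsP; move: s1; apply: contraR; rewrite negb_exists => /forallP H.
  by apply/eqP/permP => x; rewrite perm1; apply/eqP; move: (H x); rewrite negbK.
have ssi := moved_moved s i si.
move: D2; rewrite /Dsum (bigD1 i) //= (bigD1 (s i)) //=.
have h1 : (0 < d i (s i))%N by apply: d_off; rewrite eq_sym.
have h2 : (0 < d (s i) (s (s i)))%N by apply: d_off; rewrite eq_sym.
set r := (\sum_(_ | _) _)%N => E.
have r0 : r = 0%N by move: h1 h2 E; lia.
have d1 : d i (s i) = 1%N by move: h1 h2 E; lia.
have d2 : d (s i) (s (s i)) = 1%N by move: h1 h2 E; lia.
have fix_other k : k != i -> k != s i -> s k = k.
  move=> ki ksi; apply/eqP; apply/negPn/negP => sk.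
  have : (0 < r)%N.
    rewrite /r (bigD1 k) /=; last by rewrite ki ksi.
    by rewrite (leq_trans (d_off k (s k) ltac:(by rewrite eq_sym))) // leq_addr.
  by rewrite r0.
have ssi_i : s (s i) = i.
  apply/eqP; apply: contraT => ne.
  have := fix_other (s (s i)) ne ssi => /perm_inj E2.
  by move: ssi; rewrite E2 eqxx.
exists i, (s i); split => //; first by rewrite eq_sym.
  apply/permP => x; case: (tpermP i (s i) x) => [->|->|xi xsi] //.
  by apply: fix_other; apply/eqP => E0; [apply: xi|apply: xsi].
by rewrite -{2}ssi_i.
Qed.

Lemma Dsum_neq k (s : 'S_n) : s != 1%g -> (k < 2)%N -> (k == Dsum s) = false.
Proof.
move=> s1 k2; have h := Dsum_ge2 s s1; apply/eqP => E; move: h; rewrite -E.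
by case: k k2 {E} => [|[]].
Qed.

Lemma det_Mcd0 : (\det Mcd)`_0 = 1.
Proof.
rewrite det_Mcd_coef (bigD1 1%g) //= [X in _ + X]big1 => [|s s1]; last first.
  by rewrite Dsum_neq // mulr0.
rewrite odd_perm1 Dsum1 expr0 mul1r mulr1 addr0; apply: big1 => i _.
by rewrite perm1 c_diag.
Qed.

Lemma det_Mcd1 : (\det Mcd)`_1 = 0.
Proof.
rewrite det_Mcd_coef big1 // => s _.
have [->|s1] := eqVneq s 1%g; first by rewrite Dsum1 mulr0.
by rewrite Dsum_neq // mulr0.
Qed.

Definition g2 (s : 'S_n) := (-1) ^+ s * (\prod_i c i (s i)) * (2 == Dsum s)%:R.

Lemma g2_tperm i j : i != j ->
  g2 (tperm i j) = - (((d i j == 1%N) && (d j i == 1%N))%:R * (c i j * c j i)).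
Proof.
move=> ij; rewrite /g2 odd_tperm ij expr1 mulN1r.
have -> : \prod_k c k (tperm i j k) = c i j * c j i.
  rewrite (bigD1 i) //= (bigD1 j) 1?eq_sym //= tpermL tpermR big1 ?mulr1 //.
  by move=> k /andP [kj ki]; rewrite tpermD 1?eq_sym // c_diag.
have -> : Dsum (tperm i j) = (d i j + d j i)%N.
  rewrite /Dsum (bigD1 i) //= (bigD1 j) 1?eq_sym //= tpermL tpermR big1 ?addn0 //.
  by move=> k /andP [kj ki]; rewrite tpermD 1?eq_sym // d_diag.
have h1 := d_off i j ij.
rewrite mulNr mulrC; congr (- (_ * _)).
have h2' : (0 < d j i)%N by apply: d_off; rewrite eq_sym.
congr ((nat_of_bool _)%:R); apply/idP/andP => [/eqP E|[/eqP E1 /eqP E2]].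
  by split; apply/eqP; lia.
by apply/eqP; lia.
Qed.

Lemma tperm_eq_pair (a b i j : 'I_n) : a != b ->
  ((i != j) && (tperm a b == tperm i j)) = (((i, j) == (a, b)) || ((i, j) == (b, a))).
Proof.
move=> ab; apply/andP/orP => [[ij /eqP E]|[/eqP [-> ->]|/eqP [-> ->]]].
  have Ei : tperm a b i = j by rewrite E tpermL.
  move: Ei; case: (tpermP a b i) => [-> <-|-> <-|_ _ E1].
  + by left.
  + by right.
  + by move: ij; rewrite E1 eqxx.
- by split.
- by split; [rewrite eq_sym | rewrite tpermC].
Qed.

Lemma det_Mcd2 : (\det Mcd)`_2 *+ 2 =
  - \sum_(p : 'I_n * 'I_n | p.1 != p.2)
      (((d p.1 p.2 == 1%N) && (d p.2 p.1 == 1%N))%:R * (c p.1 p.2 * c p.2 p.1)).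
Proof.
rewrite det_Mcd_coef -sumrN.
have -> : \sum_(s : 'S_n) (-1) ^+ s * \prod_i c i (s i) * (2%N == Dsum s)%:R = \sum_(s : 'S_n) g2 s by [].
have -> : \sum_(p : 'I_n * 'I_n | p.1 != p.2)
    - (((d p.1 p.2 == 1%N) && (d p.2 p.1 == 1%N))%:R * (c p.1 p.2 * c p.2 p.1))
  = \sum_(p : 'I_n * 'I_n | p.1 != p.2) \sum_(s : 'S_n | s == tperm p.1 p.2) g2 s.
  by apply: eq_bigr => p pne; rewrite big_pred1_eq g2_tperm.
rewrite (exchange_big_dep xpredT) //= -sumrMnl; apply: eq_bigr => s _.
have [g0|gn0] := eqVneq (g2 s) 0.
  by rewrite g0 mul0rn big1 // => p _; case: eqP.
have : Dsum s = 2%N.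
  apply/eqP; apply: contraNT gn0 => ne; rewrite /g2.
  have -> : (2 == Dsum s) = false by apply/eqP => E; move: ne; rewrite -E eqxx.
  by rewrite mulr0.
move=> /Dsum_eq2 [a [b [ab sE _ _]]].
rewrite (eq_bigl (pred2 (a, b) (b, a))) => [|p]; last first.
  by case: p => i j /=; rewrite sE (tperm_eq_pair _ _ _ _ ab).
rewrite sumr_const card2; congr (_ *+ _).
have -> : ((a, b) != (b, a)) by apply/eqP => -[E _]; move: ab; rewrite E eqxx.
by [].
Qed.

End DetCoef.

Lemma prod_coef012 (R : comNzRingType) (I : finType) (P : pred I) (f : I -> {poly R}) :
  (forall i, P i -> (f i)`_0 = 1 /\ (f i)`_1 = 0) ->
  [/\ (\prod_(i | P i) f i)`_0 = 1, (\prod_(i | P i) f i)`_1 = 0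
    & (\prod_(i | P i) f i)`_2 = \sum_(i | P i) (f i)`_2].
Proof.
move=> H.
pose K := fun (p : {poly R}) (s : R) => [/\ p`_0 = 1, p`_1 = 0 & p`_2 = s].
suff : K (\prod_(i | P i) f i) (\sum_(i | P i) (f i)`_2) by [].
apply: big_rec2.
  by rewrite /K -[1]polyC1 !coefC.
move=> i p s Pi [h0 h1 h2]; rewrite /K; have [f0 f1] := H i Pi.
rewrite !coefM !big_ord_recr !big_ord0 /= !add0r; split.
- by rewrite f0 h0 mulr1.
- by rewrite f0 h1 f1 h0 mulr0 mul0r addr0.
- by rewrite f0 h2 f1 h1 h0 mul0r mulr1 addr0 addrC mul1r.
Qed.

Set Implicit Arguments. Unset Strict Implicit.

Section Q.
Variables (F : finFieldType) (m : {poly F}).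
Hypotheses (hm : m \is monic) (hd : (1 < (size m).-1)%N).

Lemma mkm : mk_monic m = m.
Proof. by rewrite /mk_monic hm andbT; have -> : (1 < size m)%N by lia. Qed.

Lemma rep_size (a : {poly %/ m}) : (size (rep a) < size m)%N.
Proof. by rewrite -{2}mkm; apply: size_mk_monic. Qed.

Lemma rep_inj : injective (@rep F m).
Proof. exact: val_inj. Qed.

Lemma rep1 : rep (1 : {poly %/ m}) = 1.
Proof. by rewrite /rep /= polyC1. Qed.

Lemma repM_small (a b : {poly %/ m}) :
  (size (rep a * rep b)%R < size m)%N -> rep (a * b) = rep a * rep b.
Proof.
move=> hs; rewrite /rep.
have -> : val (a * b) = Pdiv.CommonRing.rmodp (val a * val b) (mk_monic m) by [].
apply: Pdiv.CommonRing.rmodp_small; apply: (leq_trans hs); by rewrite mkm.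
Qed.

Lemma repZ c (a : {poly %/ m}) : rep (c *: a) = c *: rep a.
Proof. exact: poly_of_qpolyZ. Qed.

Lemma rep_unit_neq0 (a : {poly %/ m}) : a \is a GRing.unit -> rep a != 0.
Proof.
move=> ua; apply/eqP => r0.
have a0 : a = 0 by apply: rep_inj; rewrite r0.
by move: ua; rewrite a0 unitr0.
Qed.

Lemma Lc1 : Lc (1 : {poly %/ m}) = 1.
Proof. by rewrite /Lc rep1 lead_coef1. Qed.

Lemma Deg1 : Deg (1 : {poly %/ m}) = 0%N.
Proof. by rewrite /Deg rep1 size_poly1. Qed.

Lemma LoneP (a : {poly %/ m}) : a \in Lone m -> a \is a GRing.unit /\ Lc a = 1.
Proof. by rewrite inE => /andP [-> /eqP]. Qed.

Lemma Deg0_eq (a b : {poly %/ m}) : a \in Lone m -> b \in Lone m ->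
  Deg (a / b) = 0%N -> a = b.
Proof.
move=> /LoneP [ua La] /LoneP [ub Lb] D0.
have ug : a / b \is a GRing.unit by rewrite unitrM ua unitrV.
have : size (rep (a / b)) == 1%N.
  by move: (rep_unit_neq0 ug) D0; rewrite /Deg -size_poly_eq0; case: (size _) => [|[]].
case/size_poly1P => c c0 rc.
have Ea : a = (a / b) * b by rewrite divrK.
have ra : rep a = c%:P * rep b.
  rewrite {1}Ea repM_small rc //.
  by rewrite size_Cmul ?rep_size.
have c1 : c = 1.
  by move: La; rewrite /Lc ra mul_polyC lead_coefZ -/(Lc b) Lb mulr1.
by apply: divr1_eq; apply: rep_inj; rewrite rc c1 rep1.
Qed.

Lemma Deg_gt2 (g : {poly %/ m}) : (2 < (size m).-1)%N -> g \is a GRing.unit ->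
  Deg g = 1%N -> Deg g^-1 = 1%N -> False.
Proof.
move=> h2 ug D1 D2.
have ug' : g^-1 \is a GRing.unit by rewrite unitrV.
have n1 := rep_unit_neq0 ug; have n2 := rep_unit_neq0 ug'.
have s1 : size (rep g) = 2%N by move: D1 n1; rewrite /Deg -size_poly_eq0; case: (size _) => [|[|[]]].
have s2 : size (rep g^-1) = 2%N by move: D2 n2; rewrite /Deg -size_poly_eq0; case: (size _) => [|[|[]]].
have sp : size (rep g * rep g^-1)%R = 3%N by rewrite size_mul // s1 s2.
have E : rep (g * g^-1) = rep g * rep g^-1 by apply: repM_small; rewrite sp; lia.
by move: E; rewrite mulrV // rep1 => /(f_equal (fun p : {poly F} => size p)); rewrite sp size_poly1.
Qed.

Lemma Deg_eq2 (g : {poly %/ m}) : (size m).-1 = 2%N -> g \is a GRing.unit ->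
  Deg g != 0%N -> Deg g = 1%N.
Proof.
move=> h2 ug; have := rep_size g; rewrite /Deg; move: (size (rep g)) h2 => k; lia.
Qed.

Lemma invdiv (a b : {poly %/ m}) : a \is a GRing.unit -> b \is a GRing.unit ->
  (a / b)^-1 = b / a.
Proof. by move=> ua ub; rewrite invrM ?unitrV // invrK. Qed.

Lemma alphaL (i : 'I_(Nm m)) : alpha i \in Lone m.
Proof. exact: enum_valP. Qed.

Lemma alphaU (i : 'I_(Nm m)) : alpha i \is a GRing.unit.
Proof. by case: (LoneP (alphaL i)). Qed.

Lemma alpha_inj : injective (@alpha F m).
Proof. exact: enum_val_inj. Qed.

Lemma Deg_alpha_off (i j : 'I_(Nm m)) : i != j -> (0 < Deg (alpha i / alpha j))%N.
Proof.
move=> ij; rewrite lt0n; apply/eqP => /(Deg0_eq (alphaL i) (alphaL j)) /alpha_inj E.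
by move: ij; rewrite E eqxx.
Qed.

Definition nrm (x : {poly %/ m}) := (Lc x)^-1 *: x.

Lemma Lc_scale c (x : {poly %/ m}) : Lc (c *: x) = c * Lc x.
Proof. by rewrite /Lc repZ lead_coefZ. Qed.

Lemma Lc_unit (x : {poly %/ m}) : x \is a GRing.unit -> Lc x != 0.
Proof. by move=> ux; rewrite /Lc lead_coef_eq0 rep_unit_neq0. Qed.

Lemma scale_mul2 c d (x y : {poly %/ m}) : (c *: x) * (d *: y) = (c * d) *: (x * y).
Proof. by rewrite -scalerAl -scalerAr scalerA. Qed.

Lemma nrm_inv (x : {poly %/ m}) : x \is a GRing.unit -> (nrm x)^-1 = Lc x *: x^-1.
Proof.
move=> ux; apply: mulr1_eq; rewrite /nrm scale_mul2 mulVf ?Lc_unit //.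
by rewrite mulrV // scale1r.
Qed.

Lemma nrm_unit (x : {poly %/ m}) : x \is a GRing.unit -> nrm x \is a GRing.unit.
Proof.
move=> ux; apply/unitrP; exists (Lc x *: x^-1); split.
  by rewrite /nrm scale_mul2 mulfV ?Lc_unit // mulVr // scale1r.
by rewrite /nrm scale_mul2 mulVf ?Lc_unit // mulrV // scale1r.
Qed.

Lemma nrm_Lone (x : {poly %/ m}) : x \is a GRing.unit -> nrm x \in Lone m.
Proof.
move=> ux; rewrite inE nrm_unit //= /nrm Lc_scale mulVf ?Lc_unit //.
Qed.

Lemma nrm_scale c (x : {poly %/ m}) : c != 0 -> x \is a GRing.unit -> nrm (c *: x) = nrm x.
Proof.
move=> c0 ux; by rewrite /nrm Lc_scale scalerA invfM mulrAC mulVf // mul1r.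
Qed.

Lemma nrm_id (x : {poly %/ m}) : Lc x = 1 -> nrm x = x.
Proof. by move=> L1; rewrite /nrm L1 invr1 scale1r. Qed.

Lemma count_pairs (a : {poly %/ m}) : a \in Lone m ->
  (\sum_(b in Lone m) (nat_of_bool (Lc (a / b) * Lc (b / a) == 1)%R))%N =
  (\sum_(g in Lone m) (nat_of_bool (Lc g^-1 == 1)%R))%N.
Proof.
move=> aL; have [ua La] := LoneP aL.
rewrite [RHS](reindex_onto (fun b => nrm (b / a)) (fun g => nrm (g * a))) /=; last first.
  move=> g gL; have [ug Lg] := LoneP gL.
  have uga : g * a \is a GRing.unit by rewrite unitrM ug.
  by rewrite [nrm (g * a)]/nrm -scalerAl mulrK // nrm_scale ?invr_eq0 ?Lc_unit // nrm_id.
apply: eq_big => b.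
  apply/idP/idP => [bL|/andP [nL /eqP <-]]; last first.
    by apply: nrm_Lone; rewrite unitrM ua andbT; case: (LoneP nL).
  have [ub Lb] := LoneP bL.
  have uba : b / a \is a GRing.unit by rewrite unitrM ub unitrV.
  rewrite nrm_Lone //= [nrm (b / a)]/nrm -scalerAl divrK // nrm_scale ?invr_eq0 ?Lc_unit //.
  by rewrite nrm_id.
move=> bL; have [ub Lb] := LoneP bL.
have uba : b / a \is a GRing.unit by rewrite unitrM ub unitrV.
by rewrite nrm_inv // Lc_scale invdiv // mulrC.
Qed.

End Q.

Section Chars.
Variable F : finFieldType.

Lemma Fx_abelian : abelian (Fx F).
Proof.
apply/centsP => x _ y _; apply: val_inj; exact: (mulrC (val x) (val y)).
Qed.

Lemma chi_lin (k : Iirr (Fx F)) : 'chi[Fx F]_k \is a linear_char.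
Proof. exact: (char_abelianP _ Fx_abelian). Qed.

Lemma inFx (w : {unit F}) : w \in Fx F.
Proof. by rewrite inE. Qed.

Lemma chi_sum (w : {unit F}) :
  \sum_(k | 'chi[Fx F]_k != 1) 'chi_k w = (#|F|.-1)%:R * (w == 1%g)%:R - 1.
Proof.
have all : \sum_k 'chi[Fx F]_k w = (#|F|.-1)%:R * (w == 1%g)%:R.
  have := second_orthogonality_relation w (group1 (Fx F)).
  under eq_bigr do rewrite lin_char1 ?chi_lin // rmorph1 mulr1.
  move=> ->; rewrite (class1g (group1 (Fx F))) inE.
  case: eqP => [->|_]; last by rewrite mulr0.
  by rewrite cent11T setIT card_finField_unit mulr1.
rewrite (bigD1 0) //= irr0 in all.
have c1 : (1 : 'CF(Fx F)) w = 1 by rewrite cfun1E inFx.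
rewrite -all c1 addrC addrK.
by apply: eq_bigl => k; rewrite irr_eq1.
Qed.

Lemma toU_val (x : F) : x != 0 -> val (toU x) = x.
Proof. by move=> x0; rewrite /toU insubdK // unitfE. Qed.

Lemma pair_char_sum (u v : F) : u != 0 -> v != 0 ->
  \sum_(k | 'chi[Fx F]_k != 1) ('chi_k (toU u))^-1 * ('chi_k (toU v))^-1 =
  (#|F|.-1)%:R * (u * v == 1)%:R - 1.
Proof.
move=> u0 v0.
under eq_bigr do rewrite -!lin_charV ?chi_lin ?inFx // -lin_charM ?chi_lin ?inFx //.
rewrite chi_sum; congr (_ * (nat_of_bool _)%:R - _).
rewrite -val_eqE /= -[FinRing.uval _]/(val _) -[FinRing.uval (toU v)]/(val _) !toU_val //.
by rewrite -invfM invr_eq1.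
Qed.

End Chars.

Lemma sum_alpha (F : finFieldType) (m : {poly F}) (f : {poly %/ m} -> nat) :
  (\sum_(j < Nm m) f (alpha j))%N = (\sum_(b in Lone m) f b)%N.
Proof. by rewrite [RHS]big_enum_val. Qed.

Lemma Cm_sum (F : finFieldType) (m : {poly F}) :
  Cm m = (\sum_(g in Lone m) (nat_of_bool (Lc g^-1 == 1)%R))%N.
Proof.
rewrite /Cm -sum1_card -sum_alpha big_mkcond /=; apply: eq_bigr => i _.
by rewrite inE; case: (_ == _).
Qed.

Unset Implicit Arguments. Set Strict Implicit.

Theorem proposition4p1 (F : finFieldType) (m : {poly F}) :
  m \is monic -> (1 < (size m).-1)%N ->
  let a := fun n : nat => (\det (Dminus m))`_n in
  [/\ a 1%N = 0,
      (2 < (size m).-1)%N -> a 2%N = 0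
    & (size m).-1 = 2%N ->
      a 2%N = (Nm m)%:R / 2 *
              ((#|F|.-1)%:R * (1 - (Cm m)%:R) + (Nm m)%:R - 1)].
Proof.
move=> hm hd a.
pose cc k (i j : 'I_(Nm m)) := ('chi[Fx F]_k (toU (Lc (alpha i * (alpha j)^-1))))^-1.
pose dd (i j : 'I_(Nm m)) := Deg (alpha i * (alpha j)^-1).
have DlamE k : Dlam m k = @Mcd _ _ (cc k) dd by [].
have cdiag k i : cc k i i = 1.
  rewrite /cc mulrV ?alphaU // Lc1.
  have -> : toU (1 : F) = 1%g by apply: val_inj; rewrite toU_val ?oner_eq0.
  by rewrite lin_char1 ?chi_lin // invr1.
have ddiag i : dd i i = 0%N by rewrite /dd mulrV ?alphaU // Deg1.
have doff i j : i != j -> (0 < dd i j)%N by move=> ij; exact: (Deg_alpha_off hm hd).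
have detE : \det (Dminus m) = \prod_(k | 'chi[Fx F]_k != 1) \det (Dlam m k).
  by rewrite /Dminus (big_morph _ (@det_mulmx {poly algC} (Nm m)) (det1 {poly algC} (Nm m))).
have [p0 p1 p2] := prod_coef012 _ _ (fun k : Iirr (Fx F) => 'chi[Fx F]_k != 1)
   (fun k => \det (Dlam m k))
   (fun k _ => conj (@det_Mcd0 _ _ (cc k) dd (cdiag k) ddiag doff)
                    (@det_Mcd1 _ _ (cc k) dd ddiag doff)).
have a2E : a 2%N = \sum_(k | 'chi[Fx F]_k != 1) (\det (Dlam m k))`_2 by rewrite /a detE.
split.
- by rewrite /a detE.
- move=> h2; rewrite a2E big1 // => k _.
  have := @det_Mcd2 _ _ (cc k) dd (cdiag k) ddiag doff.
  rewrite big1 ?oppr0 -?DlamE; last first.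
    move=> p pne; case: p pne => i j /= ij.
    case E: (_ && _); last by rewrite mul0r.
    move/andP: E => [/eqP D1 /eqP D2]; exfalso.
    apply: (Deg_gt2 hm hd h2 (g := alpha i / alpha j)) => //.
      by rewrite unitrM alphaU unitrV alphaU.
    by rewrite invdiv ?alphaU.
  by move/eqP; rewrite mulrn_eq0 /= => /eqP.
move=> h2.
have D1 i j : i != j -> dd i j = 1%N.
  move=> ij; apply: (@Deg_eq2 F m hm hd (alpha i / alpha j) h2).
    by rewrite unitrM alphaU unitrV alphaU.
  by rewrite -lt0n doff.
pose q1 : algC := (#|F|.-1)%:R.
pose P (i j : 'I_(Nm m)) := (Lc (alpha i / alpha j) * Lc (alpha j / alpha i) == 1)%R.
have S2 : a 2%N *+ 2 = - \sum_(p : 'I_(Nm m) * 'I_(Nm m) | p.1 != p.2)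
                          (q1 * (nat_of_bool (P p.1 p.2))%:R - 1).
  rewrite a2E -sumrMnl.
  under eq_bigr => k _ do rewrite DlamE (@det_Mcd2 _ _ (cc k) dd (cdiag k) ddiag doff).
  rewrite sumrN exchange_big /=; congr (- _); apply: eq_bigr => -[i j] /= ij.
  have ji : j != i by rewrite eq_sym.
  under eq_bigr => k _ do rewrite (D1 i j ij) (D1 j i ji) eqxx mul1r.
  rewrite /cc pair_char_sum //; apply: Lc_unit;
    by rewrite unitrM alphaU unitrV alphaU.
have T : \sum_(p : 'I_(Nm m) * 'I_(Nm m) | p.1 != p.2)
            (q1 * (nat_of_bool (P p.1 p.2))%:R - 1)
       = (Nm m)%:R * (q1 * (Cm m)%:R - (Nm m)%:R - q1 + 1).
  have -> : \sum_(p : 'I_(Nm m) * 'I_(Nm m) | p.1 != p.2)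
            (q1 * (nat_of_bool (P p.1 p.2))%:R - 1)
      = \sum_i \sum_(j | i != j) (q1 * (nat_of_bool (P i j))%:R - 1).
    by rewrite pair_big_dep.
  rewrite (eq_bigr (fun _ => q1 * (Cm m)%:R - (Nm m)%:R - q1 + 1)); last first.
    move=> i _.
    have E : \sum_j (q1 * (nat_of_bool (P i j))%:R - 1) =
      (q1 * (nat_of_bool (P i i))%:R - 1) + \sum_(j | i != j) (q1 * (nat_of_bool (P i j))%:R - 1).
      by rewrite (bigD1 i) //=; congr (_ + _); apply: eq_bigl => j; rewrite eq_sym.
    have Pii : P i i by rewrite /P mulrV ?alphaU // Lc1 mulr1.
    have Sj : \sum_j (q1 * (nat_of_bool (P i j))%:R - 1) = q1 * (Cm m)%:R - (Nm m)%:R.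
      rewrite sumrB -mulr_sumr -natr_sum sumr_const card_ord.
      congr (q1 * _%:R - _).
      by rewrite Cm_sum -(count_pairs (alphaL i)) -sum_alpha.
    transitivity (\sum_j (q1 * (nat_of_bool (P i j))%:R - 1) - (q1 * (nat_of_bool (P i i))%:R - 1)).
      by rewrite E addrC addKr.
    rewrite Sj Pii /=; ring.
  by rewrite sumr_const card_ord mulr_natl.
have two0 : (2 : algC) != 0 by rewrite pnatr_eq0.
have -> : a 2%N = (a 2%N *+ 2) / 2.
  by rewrite -[a 2%N *+ 2]mulr_natr mulfK.
rewrite S2 T /q1; field. exact: isT.
Qed.
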